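(* Let $v\in\mathbb{R}^J$ and let $\mathscr{P}_2(v)=\inf\{\alpha\in\mathbb{R}\mid v+\alpha\mathbf{1}\in R(Cx+Qy),\ (x,y)\in\mathcal{X}\}$. Then $$\mathscr{P}_2(v)=\sup_{\mu\in\mathbb{M}_1^J,\ \lambda\in\mathbb{L}^M,\ \gamma\in\mathbb{R}^J_+}\Big\{\sum_{i\in\Omega}f_i(\mu_i,\lambda_i,\gamma)-\gamma^{\mathsf T}v-\beta(\mu,\gamma)\ \Big|\ \gamma^{\mathsf T}\mathbf{1}=1,\ \mathbb{E}[\lambda]=0\Big\}$$ $$\qquad=\sup_{m\in\mathbb{M}_f^J,\ \lambda\in\mathbb{L}^M}\Big\{\sum_{i\in\Omega}\tilde f_i(m_i,\lambda_i)-\sum_{i\in\Omega}m_i^{\mathsf T}v-\tilde\beta(m)\ \Big|\ \sum_{i\in\Omega}m_i^{\mathsf T}\mathbf{1}=1,\ \mathbb{E}[\lambda]=0\Big\}.$$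
   Context: Probability space: $\Omega=\{1,\dots,I\}$, $I\ge 2$, with probabilities $p_i>0$, $\sum_{i\in\Omega}p_i=1$. For an integer $J\ge1$, $\mathbb{L}^J$ denotes the set of random vectors $u:\Omega\to\mathbb{R}^J$, identified with tuples $(u_1,\dots,u_I)$, $u_i\in\mathbb{R}^J$; $\mathbb{L}^{J\times N}$ denotes random $J\times N$ matrices with realizations $Q_1,\dots,Q_I$; $\mathbb{L}^N_+$ the random vectors with nonnegative components; $\mathbb{E}[u]=\sum_{i}p_iu_i$. $u\le v$ means $u_i^j\le v_i^j$ for all $i,j$. $\mathbf{1}=(1,\dots,1)^{\mathsf T}\in\mathbb{R}^J$. A multivariate convex risk measure is a map $R:\mathbb{L}^J\to 2^{\mathbb{R}^J}$ such that: (A1) $u\le v$ implies $R(u)\supseteq R(v)$; (A2) $R(u+z)=R(u)+z$ for all $z\in\mathbb{R}^J$; (A3) $R(u)\notin\{\emptyset,\mathbb{R}^J\}$; (A4) $R(\gamma u+(1-\gamma)v)\supseteq\gamma R(u)+(1-\gamma)R(v)$ for $\gamma\in(0,1)$; (A5) the acceptance set $\mathcal{A}=\{u\in\mathbb{L}^J\mid 0\in R(u)\}$ is closed. $\mathbb{M}_1^J$ denotes the set of $J$-tuples $\mu=(\mu^1,\dots,\mu^J)$ of probability measures on $\Omega$, with $\mu_i=(\mu_i^1,\dots,\mu_i^J)^{\mathsf T}$, and $\mathbb{E}^\mu[u]=\sum_{i\in\Omega}\mu_i\cdot u_i$, where $\cdot$ is the componentwise (Hadamard) product. $\mathbb{M}_f^J$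 denotes the set of $J$-tuples $m=(m^1,\dots,m^J)$ of finite (nonnegative) measures on $\Omega$, with $m_i=(m_i^1,\dots,m_i^J)^{\mathsf T}\in\mathbb{R}^J_+$. The minimal penalty function is $\beta(\mu,w)=\sup_{u\in\mathcal{A}}w^{\mathsf T}\mathbb{E}^\mu[u]$ for $\mu\in\mathbb{M}_1^J$, $w\in\mathbb{R}^J_+\setminus\{0\}$; it is known that $\inf_{z\in R(u)}w^{\mathsf T}z=\sup_{\mu\in\mathbb{M}_1^J}(w^{\mathsf T}\mathbb{E}^\mu[u]-\beta(\mu,w))$. Also $\tilde\beta(m)=\sup_{u\in\mathcal{A}}\sum_{i\in\Omega}m_i^{\mathsf T}u_i$ for $m\in\mathbb{M}_f^J$. Problem data: $A\in\mathbb{R}^{K\times M}$, $b\in\mathbb{R}^K$, $C\in\mathbb{R}^{J\times M}$, random $W\in\mathbb{L}^{L\times N}$, $T\in\mathbb{L}^{L\times M}$, $h\in\mathbb{L}^L$, $Q\in\mathbb{L}^{J\times N}$; $\mathcal{X}=\{(x,y)\in\mathbb{R}^M_+\times\mathbb{L}^N_+\mid Ax=b,\ T_ix+W_iy_i=h_i\ \forall i\in\Omega\}$, assumed nonempty and compact; $Cx+Qy$ has realizations $Cx+Q_iy_i$. For each $i$, $\mathcal{F}_i=\{(x_i,y_i)\in\mathbb{R}^M_+\times\mathbb{R}^N_+\mid Ax_i=b,\ T_ix_i+W_iy_i=h_i\}$, assumed nonempty and compact. For $\mu_i\in\mathbb{R}^J_+$, $\lambda_i\in\mathbb{R}^M$,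 $\gamma\in\mathbb{R}^J_+$: $f_i(\mu_i,\lambda_i,\gamma)=\inf_{(x_i,y_i)\in\mathcal{F}_i}\big(\gamma^{\mathsf T}[\mu_i\cdot(Cx_i+Q_iy_i)]+p_i\lambda_i^{\mathsf T}x_i\big)$, and for $m_i\in\mathbb{R}^J_+$: $\tilde f_i(m_i,\lambda_i)=\inf_{(x_i,y_i)\in\mathcal{F}_i}\big(m_i^{\mathsf T}(Cx_i+Q_iy_i)+p_i\lambda_i^{\mathsf T}x_i\big)$. *)

(* Defs.v *)
From mathcomp Require Import all_boot.
From Stdlib Require Import Reals ClassicalEpsilon.

Local Open Scope R_scope.

Definition rsum {n : nat} (F : 'I_n -> R) : R := \big[Rplus/0]_(i < n) F i.

Definition dot {n : nat} (a b : 'I_n -> R) : R := rsum (fun k => a k * b k).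

Definition matvec {m n : nat} (A : 'I_m -> 'I_n -> R) (x : 'I_n -> R) : 'I_m -> R :=
  fun k => rsum (fun j => A k j * x j).

Inductive ER : Type := ERf (r : R) | ERp | ERn.

Definition ER_le (a b : ER) : Prop :=
  match a, b with
  | ERn, _ => True
  | _, ERp => True
  | ERf x, ERf y => x <= y
  | _, _ => False
  end.

Definition is_sup_ER (S : ER -> Prop) (s : ER) : Prop :=
  (forall y, S y -> ER_le y s) /\ (forall z, (forall y, S y -> ER_le y z) -> ER_le s z).

Definition is_inf_ER (S : ER -> Prop) (s : ER) : Prop :=
  (forall y, S y -> ER_le s y) /\ (forall z, (forall y, S y -> ER_le z y) -> ER_le z s).

(* the supremum / infimum in [-oo,+oo] (they always exist; chosen by epsilon) *)
Definition ER_sup (S : ER -> Prop) : ER := epsilon (inhabits ERp) (is_sup_ER S).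
Definition ER_inf (S : ER -> Prop) : ER := epsilon (inhabits ERp) (is_inf_ER S).

(* addition; the convention for +oo + -oo is irrelevant for the theorem
   (it never occurs under the standing assumptions) *)
Definition ER_plus (a b : ER) : ER :=
  match a, b with
  | ERf x, ERf y => ERf (x + y)
  | ERn, _ | _, ERn => ERn
  | _, _ => ERp
  end.

Definition ER_opp (a : ER) : ER :=
  match a with ERf x => ERf (- x) | ERp => ERn | ERn => ERp end.

Definition ER_sum {n : nat} (F : 'I_n -> ER) : ER := \big[ER_plus/ERf 0]_(i < n) F i.

Definition closed_set {T : Type} (S : (T -> R) -> Prop) : Prop :=
  forall (u : nat -> T -> R) (l : T -> R),
    (forall k, S (u k)) -> (forall t, Un_cv (fun k => u k t) (l t)) -> S l.

Definition bounded_set {T : Type} (S : (T -> R) -> Prop) : Prop :=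
  exists B : R, forall f, S f -> forall t, Rabs (f t) <= B.

(* for T finite, closed and bounded = compact (Heine-Borel) *)
Definition compact_set {T : Type} (S : (T -> R) -> Prop) : Prop :=
  closed_set S /\ bounded_set S.

(* ---------- multivariate convex risk measures ----------
   random vectors u in L^J : 'I_I -> 'I_J -> R  (u i j = u_i^j)
   rho u : set of vectors in R^J, as a predicate. *)
Definition is_mv_convex_risk_measure {I J : nat}
  (rho : ('I_I -> 'I_J -> R) -> ('I_J -> R) -> Prop) : Prop :=
  (forall u v, (forall i j, u i j <= v i j) -> forall z, rho v z -> rho u z) /\
  (forall u (z w : 'I_J -> R),
     rho (fun i j => u i j + z j) w <-> exists w', rho u w' /\ forall j, w j = w' j + z j) /\
  (forall u, (exists z, rho u z) /\ (exists z, ~ rho u z)) /\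
  (forall u v g, 0 < g < 1 -> forall z1 z2, rho u z1 -> rho v z2 ->
     rho (fun i j => g * u i j + (1 - g) * v i j) (fun j => g * z1 j + (1 - g) * z2 j)) /\
  closed_set (fun f : 'I_I * 'I_J -> R => rho (fun i j => f (i, j)) (fun _ => 0)).

Definition acceptance {I J : nat} (rho : ('I_I -> 'I_J -> R) -> ('I_J -> R) -> Prop)
  (u : 'I_I -> 'I_J -> R) : Prop := rho u (fun _ => 0).

(* mu in M_1^J : mu i j = mu^j({i}) ; each mu^j a probability measure on Omega *)
Definition in_M1 {I J : nat} (mu : 'I_I -> 'I_J -> R) : Prop :=
  (forall i j, 0 <= mu i j) /\ (forall j, rsum (fun i => mu i j) = 1).

Definition in_Mf {I J : nat} (m : 'I_I -> 'I_J -> R) : Prop :=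
  forall i j, 0 <= m i j.

Definition beta {I J : nat} (rho : ('I_I -> 'I_J -> R) -> ('I_J -> R) -> Prop)
  (mu : 'I_I -> 'I_J -> R) (w : 'I_J -> R) : ER :=
  ER_sup (fun e => exists u, acceptance rho u /\
            e = ERf (dot w (fun j => rsum (fun i => mu i j * u i j)))).

Definition beta_t {I J : nat} (rho : ('I_I -> 'I_J -> R) -> ('I_J -> R) -> Prop)
  (m : 'I_I -> 'I_J -> R) : ER :=
  ER_sup (fun e => exists u, acceptance rho u /\ e = ERf (rsum (fun i => dot (m i) (u i)))).

Definition inX {I M N K L : nat} (A : 'I_K -> 'I_M -> R) (b : 'I_K -> R)
  (W : 'I_I -> 'I_L -> 'I_N -> R) (T : 'I_I -> 'I_L -> 'I_M -> R) (h : 'I_I -> 'I_L -> R)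
  (x : 'I_M -> R) (y : 'I_I -> 'I_N -> R) : Prop :=
  (forall k, 0 <= x k) /\ (forall i n, 0 <= y i n) /\
  (forall k, matvec A x k = b k) /\
  (forall i l, matvec (T i) x l + matvec (W i) (y i) l = h i l).

Definition inF {I M N K L : nat} (A : 'I_K -> 'I_M -> R) (b : 'I_K -> R)
  (W : 'I_I -> 'I_L -> 'I_N -> R) (T : 'I_I -> 'I_L -> 'I_M -> R) (h : 'I_I -> 'I_L -> R)
  (i : 'I_I) (x : 'I_M -> R) (y : 'I_N -> R) : Prop :=
  (forall k, 0 <= x k) /\ (forall n, 0 <= y n) /\
  (forall k, matvec A x k = b k) /\
  (forall l, matvec (T i) x l + matvec (W i) y l = h i l).

Definition f_i {I J M N K L : nat} (p : 'I_I -> R) (A : 'I_K -> 'I_M -> R) (b : 'I_K -> R)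
  (C : 'I_J -> 'I_M -> R)
  (W : 'I_I -> 'I_L -> 'I_N -> R) (T : 'I_I -> 'I_L -> 'I_M -> R) (h : 'I_I -> 'I_L -> R)
  (Q : 'I_I -> 'I_J -> 'I_N -> R)
  (i : 'I_I) (mui : 'I_J -> R) (lami : 'I_M -> R) (gam : 'I_J -> R) : ER :=
  ER_inf (fun e => exists x y, inF A b W T h i x y /\
     e = ERf (dot gam (fun j => mui j * (matvec C x j + matvec (Q i) y j))
              + p i * dot lami x)).

Definition ft_i {I J M N K L : nat} (p : 'I_I -> R) (A : 'I_K -> 'I_M -> R) (b : 'I_K -> R)
  (C : 'I_J -> 'I_M -> R)
  (W : 'I_I -> 'I_L -> 'I_N -> R) (T : 'I_I -> 'I_L -> 'I_M -> R) (h : 'I_I -> 'I_L -> R)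
  (Q : 'I_I -> 'I_J -> 'I_N -> R)
  (i : 'I_I) (mi : 'I_J -> R) (lami : 'I_M -> R) : ER :=
  ER_inf (fun e => exists x y, inF A b W T h i x y /\
     e = ERf (dot mi (fun j => matvec C x j + matvec (Q i) y j) + p i * dot lami x)).

Definition P2_set {I J M N K L : nat} (A : 'I_K -> 'I_M -> R) (b : 'I_K -> R)
  (C : 'I_J -> 'I_M -> R)
  (W : 'I_I -> 'I_L -> 'I_N -> R) (T : 'I_I -> 'I_L -> 'I_M -> R) (h : 'I_I -> 'I_L -> R)
  (Q : 'I_I -> 'I_J -> 'I_N -> R)
  (rho : ('I_I -> 'I_J -> R) -> ('I_J -> R) -> Prop) (v : 'I_J -> R) : ER -> Prop :=
  fun e => exists (alpha : R) x y, inX A b W T h x y /\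
     rho (fun i j => matvec C x j + matvec (Q i) (y i) j) (fun j => v j + alpha) /\
     e = ERf alpha.

Definition D1_set {I J M N K L : nat} (p : 'I_I -> R) (A : 'I_K -> 'I_M -> R) (b : 'I_K -> R)
  (C : 'I_J -> 'I_M -> R)
  (W : 'I_I -> 'I_L -> 'I_N -> R) (T : 'I_I -> 'I_L -> 'I_M -> R) (h : 'I_I -> 'I_L -> R)
  (Q : 'I_I -> 'I_J -> 'I_N -> R)
  (rho : ('I_I -> 'I_J -> R) -> ('I_J -> R) -> Prop) (v : 'I_J -> R) : ER -> Prop :=
  fun e => exists (mu : 'I_I -> 'I_J -> R) (lam : 'I_I -> 'I_M -> R) (gam : 'I_J -> R),
     in_M1 mu /\ (forall j, 0 <= gam j) /\ rsum gam = 1 /\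
     (forall k, rsum (fun i => p i * lam i k) = 0) /\
     e = ER_plus (ER_plus (ER_sum (fun i => f_i p A b C W T h Q i (mu i) (lam i) gam))
                          (ERf (- dot gam v)))
                 (ER_opp (beta rho mu gam)).

Definition D2_set {I J M N K L : nat} (p : 'I_I -> R) (A : 'I_K -> 'I_M -> R) (b : 'I_K -> R)
  (C : 'I_J -> 'I_M -> R)
  (W : 'I_I -> 'I_L -> 'I_N -> R) (T : 'I_I -> 'I_L -> 'I_M -> R) (h : 'I_I -> 'I_L -> R)
  (Q : 'I_I -> 'I_J -> 'I_N -> R)
  (rho : ('I_I -> 'I_J -> R) -> ('I_J -> R) -> Prop) (v : 'I_J -> R) : ER -> Prop :=
  fun e => exists (m : 'I_I -> 'I_J -> R) (lam : 'I_I -> 'I_M -> R),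
     in_Mf m /\ rsum (fun i => rsum (m i)) = 1 /\
     (forall k, rsum (fun i => p i * lam i k) = 0) /\
     e = ER_plus (ER_plus (ER_sum (fun i => ft_i p A b C W T h Q i (m i) (lam i)))
                          (ERf (- rsum (fun i => dot (m i) v))))
                 (ER_opp (beta_t rho m)).

(* Main.v *)
Require Import Defs.
From mathcomp Require Import all_boot.
From Stdlib Require Import Reals.
From HB Require Import structures.
From Stdlib Require Import Lra Psatz ClassicalEpsilon FunctionalExtensionality PropExtensionality Classical Lia ZArith.
From mathcomp Require Import zify.
Local Open Scope R_scope.

Lemma Rplus_assoc' : associative Rplus.
Proof. move=> x y z; by rewrite Rplus_assoc. Qed.
HB.instance Definition _ := Monoid.isComLaw.Build R 0 Rplus Rplus_assoc' Rplus_comm Rplus_0_l.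

Definition fsum {T : finType} (F : T -> R) : R := \big[Rplus/0]_(t : T) F t.

Lemma rsum_fsum n (F : 'I_n -> R) : rsum F = fsum F.
Proof. reflexivity. Qed.

Lemma fsum_add (T : finType) (F G : T -> R) : fsum (fun t => F t + G t) = fsum F + fsum G.
Proof. by rewrite /fsum big_split. Qed.

Lemma Un_cv_ext (u w : nat -> R) l : (forall n, u n = w n) -> Un_cv u l -> Un_cv w l.
Proof. move=> E H e He; case: (H e He) => N HN; exists N => n Hn; rewrite -E; by apply: HN. Qed.

Section FS.
Variable T : finType.
Implicit Types F G : T -> R.

Lemma fsum_ext F G : (forall t, F t = G t) -> fsum F = fsum G.
Proof. by move=> H; rewrite /fsum; apply: eq_bigr => t _; apply: H. Qed.

Lemma fsum_scale c F : fsum (fun t => c * F t) = c * fsum F.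
Proof. rewrite /fsum; elim: (index_enum T) => [|x s IH]; rewrite ?big_nil ?big_cons; [ring| rewrite IH; ring]. Qed.

Lemma fsum_opp F : fsum (fun t => - F t) = - fsum F.
Proof. rewrite /fsum; elim: (index_enum T) => [|x s IH]; rewrite ?big_nil ?big_cons; [ring| rewrite IH; ring]. Qed.

Lemma fsum_sub F G : fsum (fun t => F t - G t) = fsum F - fsum G.
Proof. rewrite /fsum; elim: (index_enum T) => [|x s IH]; rewrite ?big_nil ?big_cons; [ring| rewrite IH; ring]. Qed.

Lemma fsum_const0 : fsum (fun _ : T => 0) = 0.
Proof. rewrite /fsum; elim: (index_enum T) => [|x s IH]; rewrite ?big_nil ?big_cons; [ring| rewrite IH; ring]. Qed.

Lemma fsum_le F G : (forall t, F t <= G t) -> fsum F <= fsum G.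
Proof. move=> H; rewrite /fsum; elim: (index_enum T) => [|x s IH]; rewrite ?big_nil ?big_cons; [lra| have := H x; lra]. Qed.

Lemma fsum_ge0 F : (forall t, 0 <= F t) -> 0 <= fsum F.
Proof. move=> H; rewrite -fsum_const0; apply: fsum_le => t; apply: H. Qed.

Lemma fsum_single F t0 : (forall t, t <> t0 -> F t = 0) -> fsum F = F t0.
Proof.
move=> H; rewrite /fsum (bigD1 t0) //= big1; first by rewrite Rplus_0_r.
by move=> t /eqP Ht; apply: H.
Qed.

Lemma fsum_term_le F t0 : (forall t, 0 <= F t) -> F t0 <= fsum F.
Proof.
move=> H; rewrite /fsum (bigD1 t0) //=.
have: 0 <= \big[Rplus/0]_(i | i != t0) F i.
  by apply: (big_ind (fun x => 0 <= x)) => //; [lra | move=> x y; lra].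
lra.
Qed.

Lemma fsum_eq0 F : (forall t, 0 <= F t) -> fsum F = 0 -> forall t, F t = 0.
Proof. move=> H H0 t; have := fsum_term_le F t H; have := H t; lra. Qed.

Lemma fsum_cv (f : nat -> T -> R) (l : T -> R) :
  (forall t, Un_cv (fun n => f n t) (l t)) -> Un_cv (fun n => fsum (f n)) (fsum l).
Proof.
move=> H; rewrite /fsum; elim: (index_enum T) => [|x s IH].
  apply: (Un_cv_ext (fun _ => 0)); first by move=> n; rewrite big_nil.
  rewrite big_nil.
  by move=> e He; exists 0%nat => n _; rewrite /R_dist Rminus_0_r Rabs_R0.
apply: (Un_cv_ext (fun n => f n x + \big[Rplus/0]_(t <- s) f n t)).
  by move=> n; rewrite big_cons.
by rewrite big_cons; apply: CV_plus.
Qed.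
End FS.

Lemma fsum_sumType (T1 T2 : finType) (F : T1 + T2 -> R) :
  fsum F = fsum (fun a => F (inl a)) + fsum (fun b => F (inr b)).
Proof. by rewrite /fsum big_sumType. Qed.

Lemma fsum_pair (T1 T2 : finType) (F : T1 * T2 -> R) :
  fsum F = fsum (fun a => fsum (fun b => F (a, b))).
Proof. rewrite /fsum pair_big; apply: eq_bigr; by case. Qed.

Lemma fsum_exchange (T1 T2 : finType) (F : T1 -> T2 -> R) :
  fsum (fun a => fsum (fun b => F a b)) = fsum (fun b => fsum (fun a => F a b)).
Proof. by rewrite /fsum exchange_big. Qed.

Lemma fsum_unit (F : unit -> R) : fsum F = F tt.
Proof. by apply: fsum_single => -[]. Qed.


Lemma inv_small e : 0 < e -> exists N : nat, forall n, (N <= n)%coq_nat -> / (INR n + 1) < e.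
Proof.
move=> He; have [H1 _] := archimed (/ e).
have Hie : 0 < / e by apply: Rinv_0_lt_compat.
exists (Z.to_nat (up (/ e))) => n Hn.
have Hz : (0 <= up (/ e))%Z.
  apply: le_IZR; lra.
have HN : IZR (up (/ e)) <= INR n.
  rewrite -(Z2Nat.id _ Hz) -INR_IZR_INZ; apply: le_INR. lia.
have := pos_INR n => Hp; rewrite -(Rinv_inv e); apply: Rinv_lt_contravar; first by apply: Rmult_lt_0_compat; lra.
lra.
Qed.

Lemma exists_fun {A B : Type} (P : A -> B -> Prop) :
  (forall a, exists b, P a b) -> exists f : A -> B, forall a, P a (f a).
Proof.
move=> H; exists (fun a => proj1_sig (constructive_indefinite_description _ (H a))).
move=> a; exact: (proj2_sig (constructive_indefinite_description _ (H a))).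
Qed.

Definition incr (phi : nat -> nat) := forall n, (phi n < phi (S n))%nat.

Lemma incr_ge phi : incr phi -> forall n, (n <= phi n)%nat.
Proof. move=> H; elim=> [|n IH]; [lia| have := H n; lia]. Qed.

Lemma incr_mono phi : incr phi -> forall n m, (n <= m)%nat -> (phi n <= phi m)%nat.
Proof.
move=> H n m; elim: m => [|m IH] Hnm.
  by have -> : n = 0%nat by lia.
case: (Nat.eq_dec n (S m)) => [->|Hne]; first lia.
have := H m; have := IH ltac:(lia); lia.
Qed.

Lemma incr_comp phi psi : incr phi -> incr psi -> incr (fun n => phi (psi n)).
Proof.
move=> H1 H2 n; have := H2 n => h.
have := incr_mono phi H1 (S (psi n)) (psi (S n)) ltac:(lia).
have := H1 (psi n); lia.
Qed.

Lemma cv_sub (u : nat -> R) l phi : incr phi -> Un_cv u l -> Un_cv (fun n => u (phi n)) l.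
Proof.
move=> Hphi H e He; case: (H e He) => N HN; exists N => n Hn; apply: HN.
have := incr_ge phi Hphi n; lia.
Qed.

Lemma Rabs_bnd x B : Rabs x <= B -> -B <= x <= B.
Proof. split_Rabs; lra. Qed.

Lemma BW1 (u : nat -> R) B : (forall n, Rabs (u n) <= B) ->
  exists phi, incr phi /\ exists l, Un_cv (fun n => u (phi n)) l.
Proof.
move=> Hb.
have [l Hl] : exists l, ValAdh u l.
  apply: (Bolzano_Weierstrass u (fun c => -B <= c <= B) (compact_P3 (-B) B)).
  move=> n; have := Hb n; move/Rabs_bnd; lra.
have Hg : forall Nk : nat * nat, exists p, (Nk.1 <= p)%nat /\ Rabs (u p - l) < / (INR Nk.2 + 1).
  move=> [N k]; have Hpos : 0 < / (INR k + 1).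
    apply: Rinv_0_lt_compat; have := pos_INR k; lra.
  have Hnb : neighbourhood (fun y => Rabs (y - l) < / (INR k + 1)) l.
    by exists (mkposreal _ Hpos) => y Hy; exact: Hy.
  have [p [Hp1 Hp2]] := Hl (fun y => Rabs (y - l) < / (INR k + 1)) N Hnb.
  exists p; split => /=; [lia|exact: Hp2].
have [g Hgs] := exists_fun _ Hg.
pose phi := fix phi n := match n with O => g (0, 0)%nat | S n => g (S (phi n), S n) end.
exists phi; split.
  move=> n /=; have [h1 _] := Hgs (S (phi n), S n); simpl in h1; lia.
exists l => e He; have [N HN] := inv_small e He; exists N => n Hn.
rewrite /R_dist.
have Hn' : Rabs (u (phi n) - l) < / (INR n + 1).
  case: n Hn => [|n] Hn; [exact: (Hgs (0, 0)%nat).2 | exact: (Hgs (S (phi n), S n)).2].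
have := HN n Hn; lra.
Qed.

Lemma BWn (T : finType) (f : nat -> T -> R) B : (forall n t, Rabs (f n t) <= B) ->
  exists phi, incr phi /\ exists l : T -> R, forall t, Un_cv (fun n => f (phi n) t) (l t).
Proof.
move=> Hb.
have H : forall s : seq T, exists phi, incr phi /\
    forall t, t \in s -> exists l, Un_cv (fun n => f (phi n) t) l.
  elim=> [|x s [phi [Hphi IH]]].
    by exists (fun n : nat => n); split => // n /=; lia.
  have [psi [Hpsi [l Hl]]] := BW1 (fun n => f (phi n) x) B (fun n => Hb _ _).
  exists (fun n => phi (psi n)); split; first exact: incr_comp.
  move=> t; rewrite in_cons => /orP [/eqP -> | Ht]; first by exists l.
  have [l' Hl'] := IH t Ht; exists l'.
  exact: (cv_sub (fun n => f (phi n) t) l' psi Hpsi Hl').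
have [phi [Hphi Hl]] := H (index_enum T).
have [l Hl'] := exists_fun (fun t l => Un_cv (fun n => f (phi n) t) l)
  (fun t => Hl t (mem_index_enum t)).
by exists phi; split => //; exists l.
Qed.


Lemma cv_const (c : R) : Un_cv (fun _ => c) c.
Proof. by move=> e He; exists 0%nat => n _; rewrite /R_dist Rminus_diag Rabs_R0. Qed.

Lemma cv_inv_sub phi : incr phi -> Un_cv (fun n => / (INR (phi n) + 1)) 0.
Proof.
move=> Hphi e He; have [N HN] := inv_small e He; exists N => n Hn.
have Hp : 0 < / (INR (phi n) + 1) by apply: Rinv_0_lt_compat; have := pos_INR (phi n); lra.
rewrite /R_dist Rminus_0_r Rabs_right; last lra.
apply: HN; have := incr_ge phi Hphi n; lia.
Qed.

Lemma abs_le_sq x : Rabs x <= x * x + 1.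
Proof. case: (Rcase_abs x) => h; [rewrite Rabs_left // | rewrite Rabs_right //]; nra. Qed.

Definition ip {T : finType} (a b : T -> R) := fsum (fun t => a t * b t).
Definition nrm2 {T : finType} (a : T -> R) := ip a a.

Lemma nrm2_ge0 (T : finType) (a : T -> R) : 0 <= nrm2 a.
Proof. apply: fsum_ge0 => t; nra. Qed.

Lemma nrm2_coord (T : finType) (a : T -> R) t : (a t) * (a t) <= nrm2 a.
Proof. apply: (fsum_term_le _ (fun t => a t * a t)) => s; nra. Qed.

Lemma separation (T : finType) (S : (T -> R) -> Prop) (pt : T -> R) :
  (forall k1 k2 s, S k1 -> S k2 -> 0 < s < 1 -> S (fun t => k1 t + s * (k2 t - k1 t))) ->
  (exists k, S k) ->
  (exists d, 0 < d /\ forall k, S k -> d <= nrm2 (fun t => k t - pt t)) ->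
  exists a : T -> R, exists d, 0 < d /\ forall k, S k -> ip a pt + d <= ip a k.
Proof.
move=> Hconv [k0 Hk0] [d [Hd Hdk]].
pose E := fun r => exists k, S k /\ r = - nrm2 (fun t => k t - pt t).
have [m [Hm1 Hm2]] : {m | is_lub E m}.
  apply: completeness; last by exists (- nrm2 (fun t => k0 t - pt t)), k0.
  by exists (- d) => r [k [Hk ->]]; have := Hdk k Hk; lra.
pose D := - m.
have HDd : d <= D.
  have : m <= - d by apply: Hm2 => r [k [Hk ->]]; have := Hdk k Hk; lra.
  rewrite /D; lra.
have HD : forall k, S k -> D <= nrm2 (fun t => k t - pt t).
  by move=> k Hk; have := Hm1 _ (ex_intro _ k (conj Hk erefl)); rewrite /D; lra.
have Hmin : forall n : nat, exists k, S k /\ nrm2 (fun t => k t - pt t) <= D + / (INR n + 1).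
  move=> n; apply: NNPP => Hn.
  have Hpos : 0 < / (INR n + 1) by apply: Rinv_0_lt_compat; have := pos_INR n; lra.
  have : m <= m - / (INR n + 1); last lra.
  apply: Hm2 => r [k [Hk ->]].
  have : ~ (nrm2 (fun t => k t - pt t) <= D + / (INR n + 1)) by move=> h; apply: Hn; exists k.
  rewrite /D; lra.
have [kk Hkk] := exists_fun _ Hmin.
pose Bp := fsum (fun t => Rabs (pt t)).
have Hbnd : forall n t, Rabs (kk n t) <= Bp + (D + 1) + 1.
  move=> n t; have [_ H1] := Hkk n.
  have H2 := nrm2_coord _ (fun t => kk n t - pt t) t.
  have H3 : / (INR n + 1) <= 1.
    rewrite -Rinv_1; apply: Rinv_le_contravar; first lra; have := pos_INR n; lra.
  have H4 : Rabs (pt t) <= Bp by apply: (fsum_term_le _ (fun t => Rabs (pt t))) => s; apply: Rabs_pos.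
  have H5 : Rabs (kk n t - pt t) <= (kk n t - pt t) * (kk n t - pt t) + 1 by apply: abs_le_sq.
  have H6 : Rabs (kk n t) <= Rabs (kk n t - pt t) + Rabs (pt t).
    by have := Rabs_triang (kk n t - pt t) (pt t); rewrite /Rminus Rplus_assoc Rplus_opp_l Rplus_0_r.
  simpl in H2; lra.
have [phi [Hphi [q Hq]]] := BWn T kk _ Hbnd.
pose a := fun t => q t - pt t.
have Hcva : forall t, Un_cv (fun n => kk (phi n) t - pt t) (a t).
  by move=> t; apply: CV_minus => //; apply: cv_const.
have HaD : D <= nrm2 a.
  apply: (Rle_cv_lim (Un := fun _ => D) (Vn := fun n => nrm2 (fun t => kk (phi n) t - pt t))).
  - by move=> n; apply: HD; exact: (Hkk (phi n)).1.
  - exact: cv_const.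
  - by apply: fsum_cv => t; apply: CV_mult; apply: Hcva.
have Hab : forall k, S k -> 0 <= ip a (fun t => k t - q t).
  move=> k Hk.
  pose b := fun t => k t - q t.
  have Hs : forall s, 0 < s < 1 -> 0 <= 2 * ip a b + s * nrm2 b.
    move=> s Hs.
    pose w := fun n => fsum (fun t => (kk (phi n) t - pt t + s * (k t - kk (phi n) t)) *
                                     (kk (phi n) t - pt t + s * (k t - kk (phi n) t))
                                   - (kk (phi n) t - pt t) * (kk (phi n) t - pt t)).
    have Hw : forall n, - / (INR (phi n) + 1) <= w n.
      move=> n; rewrite /w fsum_sub.
      have [Hk1 Hk2] := Hkk (phi n).
      have Hz := HD _ (Hconv _ _ s Hk1 Hk Hs).
      have -> : fsum (fun t => (kk (phi n) t - pt t + s * (k t - kk (phi n) t)) *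
                               (kk (phi n) t - pt t + s * (k t - kk (phi n) t))) =
                nrm2 (fun t => kk (phi n) t + s * (k t - kk (phi n) t) - pt t).
        by apply: fsum_ext => t; ring.
      rewrite /nrm2 /ip in Hk2 Hz *; lra.
    have Hwl : Un_cv w (fsum (fun t => (a t + s * b t) * (a t + s * b t) - a t * a t)).
      apply: fsum_cv => t.
      have Hb : Un_cv (fun n => k t - kk (phi n) t) (b t).
        by apply: CV_minus; [apply: cv_const | apply: Hq].
      have HA := Hcva t.
      have HsB := CV_mult _ _ _ _ (cv_const s) Hb.
      have HS := CV_plus _ _ _ _ HA HsB.
      exact: (CV_minus _ _ _ _ (CV_mult _ _ _ _ HS HS) (CV_mult _ _ _ _ HA HA)).
    have Hlim := Rle_cv_lim Hw (CV_opp _ _ (cv_inv_sub phi Hphi)) Hwl.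
    have -> : 2 * ip a b + s * nrm2 b =
              / s * fsum (fun t => (a t + s * b t) * (a t + s * b t) - a t * a t).
      transitivity (fsum (fun t => 2 * (a t * b t) + s * (b t * b t))).
        by rewrite fsum_add !fsum_scale.
      rewrite -fsum_scale; apply: fsum_ext => t; field; lra.
    apply: Rmult_le_pos; last lra.
    by apply: Rlt_le; apply: Rinv_0_lt_compat; lra.
  have Hnb := nrm2_ge0 _ b.
  change (0 <= ip a b); apply: NNPP => Hneg0.
  have Hneg : ip a b < 0 by apply: Rnot_le_lt.
  pose s := Rmin (1/2) (- ip a b / (nrm2 b + 1)).
  have Hs1 : 0 < s.
    apply: Rmin_pos; first lra.
    apply: Rdiv_lt_0_compat; lra.
  have Hs2 : s <= - ip a b / (nrm2 b + 1) by apply: Rmin_r.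
  have Hs3 : s <= 1/2 by apply: Rmin_l.
  have := Hs s ltac:(lra).
  have : s * (nrm2 b + 1) <= - ip a b.
    have := Rmult_le_compat_r (nrm2 b + 1) _ _ ltac:(lra) Hs2.
    by rewrite /Rdiv Rmult_assoc Rinv_l; lra.
  nra.
exists a, D; split; first lra.
move=> k Hk; have := Hab k Hk; have := HaD.
have -> : ip a (fun t => k t - q t) = ip a k - ip a pt - nrm2 a.
  rewrite /nrm2 /ip -!fsum_sub; apply: fsum_ext => t; rewrite /a; ring.
lra.
Qed.


Lemma ex_sup (S : ER -> Prop) : exists s, is_sup_ER S s.
Proof.
case: (classic (S ERp)) => Hp.
  exists ERp; split; first by case.
  by move=> z Hz; move: (Hz _ Hp); clear Hz; case: z.
case: (classic (exists r, S (ERf r))) => Hne; last first.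
  exists ERn; split => //.
  move=> [r||] Hy //=; by case: Hne; exists r.
case: (classic (exists B, forall r, S (ERf r) -> r <= B)) => Hb.
  have [c [Hc1 Hc2]] : {c | is_lub (fun r => S (ERf r)) c}.
    by apply: completeness.
  exists (ERf c); split.
    by move=> [r| |] Hy //=; apply: Hc1.
  move=> [z| |] Hz //=.
    by apply: Hc2 => r Hr; exact: (Hz _ Hr).
  by case: Hne => r Hr; have := Hz _ Hr.
exists ERp; split; first by case.
move=> [z| |] Hz //=.
  by case: Hb; exists z => r Hr; exact: (Hz _ Hr).
by case: Hne => r Hr; have := Hz _ Hr.
Qed.

Lemma ex_inf (S : ER -> Prop) : exists s, is_inf_ER S s.
Proof.
case: (classic (S ERn)) => Hp.
  exists ERn; split; first by case.
  by move=> z Hz; move: (Hz _ Hp); clear Hz; case: z.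
case: (classic (exists r, S (ERf r))) => Hne; last first.
  exists ERp; split; last by move=> [].

  move=> [r||] Hy //=; by case: Hne; exists r.
case: (classic (exists B, forall r, S (ERf r) -> B <= r)) => Hb.
  have [c [Hc1 Hc2]] : {c | is_lub (fun r => S (ERf (- r))) c}.
    apply: completeness.
      by case: Hb => B HB; exists (- B) => r Hr; have := HB _ Hr; lra.
    by case: Hne => r Hr; exists (- r); rewrite Ropp_involutive.
  exists (ERf (- c)); split.
    move=> [r| |] Hy //=; have := Hc1 (- r); rewrite Ropp_involutive => H; have := H Hy; lra.
  move=> [z| |] Hz //=.
    suff : c <= - z by lra.
    by apply: Hc2 => r Hr; have := Hz _ Hr => /= ?; lra.
  by case: Hne => r Hr; have := Hz _ Hr.
exists ERn; split; first by case.
move=> [z| |] Hz //=.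
  by case: Hb; exists z => r Hr; exact: (Hz _ Hr).
by case: Hne => r Hr; have := Hz _ Hr.
Qed.

Lemma ER_sup_spec S : is_sup_ER S (ER_sup S).
Proof. rewrite /ER_sup; apply: epsilon_spec; exact: ex_sup. Qed.

Lemma ER_inf_spec S : is_inf_ER S (ER_inf S).
Proof. rewrite /ER_inf; apply: epsilon_spec; exact: ex_inf. Qed.

Lemma inf_fin (S : ER -> Prop) y0 r0 :
  (forall e, S e -> exists r, e = ERf r) -> S (ERf y0) ->
  (forall y, S (ERf y) -> r0 <= y) ->
  exists c, ER_inf S = ERf c /\ (forall y, S (ERf y) -> c <= y) /\
    (forall e, 0 < e -> exists y, S (ERf y) /\ y < c + e).
Proof.
move=> Hfin Hy0 Hr0; have [H1 H2] := ER_inf_spec S.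
have Hlow : ER_le (ERf r0) (ER_inf S).
  by apply: H2 => e He; have [r Er] := Hfin e He; subst e; exact: Hr0.
have Hup := H1 _ Hy0.
move: Hlow Hup H1 H2; case: (ER_inf S) => [c| |] //= _ _ H1 H2.
exists c; split => //; split; first by move=> y Hy; exact: (H1 _ Hy).
move=> e He; apply: NNPP => Hn.
have : ER_le (ERf (c + e)) (ERf c).
  apply: H2 => z Hz; have [r Er] := Hfin z Hz; subst z => /=.
  apply: Rnot_lt_le => Hlt; apply: Hn; by exists r.
by simpl; lra.
Qed.

Lemma sup_fin (S : ER -> Prop) y0 r0 :
  (forall e, S e -> exists r, e = ERf r) -> S (ERf y0) ->
  (forall y, S (ERf y) -> y <= r0) ->
  exists c, ER_sup S = ERf c /\ (forall y, S (ERf y) -> y <= c) /\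
    (forall e, 0 < e -> exists y, S (ERf y) /\ c - e < y).
Proof.
move=> Hfin Hy0 Hr0; have [H1 H2] := ER_sup_spec S.
have Hup : ER_le (ER_sup S) (ERf r0).
  by apply: H2 => e He; have [r Er] := Hfin e He; subst e; exact: Hr0.
have Hlow := H1 _ Hy0.
move: Hlow Hup H1 H2; case: (ER_sup S) => [c| |] //= _ _ H1 H2.
exists c; split => //; split; first by move=> y Hy; exact: (H1 _ Hy).
move=> e He; apply: NNPP => Hn.
have : ER_le (ERf c) (ERf (c - e)).
  apply: (H2 (ERf (c - e))) => z Hz; have [r Er] := Hfin z Hz; subst z => /=.
  apply: Rnot_lt_le => Hlt; apply: Hn; by exists r.
by simpl; lra.
Qed.

Lemma sup_nonempty_cases (S : ER -> Prop) y0 :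
  (forall e, S e -> exists r, e = ERf r) -> S (ERf y0) ->
  ER_sup S = ERp \/ exists c, ER_sup S = ERf c /\ (forall y, S (ERf y) -> y <= c).
Proof.
move=> Hfin Hy0; have [H1 H2] := ER_sup_spec S.
move: H1 (H1 _ Hy0); case: (ER_sup S) => [c| |] //= H1 _; [right | by left].
by exists c; split => // y Hy; exact: (H1 (ERf y) Hy).
Qed.

Lemma ER_sum_fin n (c : 'I_n -> R) : ER_sum (fun i => ERf (c i)) = ERf (rsum c).
Proof.
rewrite /ER_sum /rsum; elim: (index_enum _) => [|x s IH]; rewrite ?big_nil ?big_cons //.
by rewrite IH.
Qed.


Lemma fsum_abs (T0 : finType) (F : T0 -> R) : Rabs (fsum F) <= fsum (fun t => Rabs (F t)).
Proof.
rewrite /fsum; elim: (index_enum T0) => [|x s IH]; rewrite ?big_nil ?big_cons.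
  by rewrite Rabs_R0; lra.
have := Rabs_triang (F x) (\big[Rplus/0]_(j <- s) F j); lra.
Qed.

Lemma dot_abs (T0 : finType) (c z Z : T0 -> R) : (forall t, Rabs (z t) <= Z t) ->
  Rabs (fsum (fun t => c t * z t)) <= fsum (fun t => Rabs (c t) * Z t).
Proof.
move=> H; apply: Rle_trans (fsum_abs _ _) _; apply: fsum_le => t.
rewrite Rabs_mult; apply: Rmult_le_compat_l; [exact: Rabs_pos | exact: H].
Qed.

Lemma fsum_lin (T0 : finType) (F G : T0 -> R) s :
  fsum (fun t => F t + s * (G t - F t)) = fsum F + s * (fsum G - fsum F).
Proof. by rewrite fsum_add fsum_scale fsum_sub. Qed.

Section Main.
Variables (I J M N K L : nat).
Variable p : 'I_I -> R.
Hypothesis Hp : forall i, 0 < p i.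
Hypothesis Hp1 : rsum p = 1.
Variables (A : 'I_K -> 'I_M -> R) (b : 'I_K -> R) (C : 'I_J -> 'I_M -> R)
  (W : 'I_I -> 'I_L -> 'I_N -> R) (T : 'I_I -> 'I_L -> 'I_M -> R)
  (h : 'I_I -> 'I_L -> R) (Q : 'I_I -> 'I_J -> 'I_N -> R)
  (rho : ('I_I -> 'I_J -> R) -> ('I_J -> R) -> Prop).
Hypothesis Hrho : is_mv_convex_risk_measure rho.
Hypothesis HFne : forall i, exists x y, inF A b W T h i x y.
Hypothesis HFc : forall i, compact_set (fun f : 'I_M + 'I_N -> R =>
            inF A b W T h i (fun k => f (inl k)) (fun n => f (inr n))).
Variable v : 'I_J -> R.

Lemma rho_ext u1 u2 w1 w2 : (forall i j, u1 i j = u2 i j) -> (forall j, w1 j = w2 j) ->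
  rho u1 w1 -> rho u2 w2.
Proof.
move=> Hu Hw; have -> : u1 = u2 by apply: functional_extensionality => i; apply: functional_extensionality => j.
by have -> : w1 = w2 by apply: functional_extensionality.
Qed.

Lemma rho_shift u w z : rho u w -> rho (fun i j => u i j + z j) (fun j => w j + z j).
Proof.
move=> H; have [_ [HA2 _]] := Hrho.
by apply/(HA2 u z (fun j => w j + z j)); exists w.
Qed.

Lemma acc_down u u' : (forall i j, u i j <= u' i j) -> acceptance rho u' -> acceptance rho u.
Proof. move=> H; have [HA1 _] := Hrho; exact: HA1. Qed.

Lemma acc_conv u1 u2 s : acceptance rho u1 -> acceptance rho u2 -> 0 < s < 1 ->
  acceptance rho (fun i j => u1 i j + s * (u2 i j - u1 i j)).
Proof.
move=> H1 H2 Hs; have [_ [_ [_ [HA4 _]]]] := Hrho.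
have := HA4 u1 u2 (1 - s) ltac:(lra) _ _ H1 H2.
by apply: rho_ext => *; ring.
Qed.

Lemma rho_up u z z' : rho u z -> (forall j, z j <= z' j) -> rho u z'.
Proof.
move=> H Hz; have [HA1 _] := Hrho.
have H1 : rho (fun i j => u i j - (z' j - z j)) z.
  by apply: (HA1 _ u) => // i j; have := Hz j; lra.
have := rho_shift _ _ (fun j => z' j - z j) H1.
by apply: rho_ext => *; ring.
Qed.

Lemma rho_acc u w : rho u w -> acceptance rho (fun i j => u i j - w j).
Proof.
move=> H; have := rho_shift _ _ (fun j => - w j) H.
by apply: rho_ext => *; ring.
Qed.

Lemma acc_rho u w : acceptance rho (fun i j => u i j - w j) -> rho u w.
Proof.
move=> H; have := rho_shift _ _ w H.
by apply: rho_ext => *; rewrite /=; ring.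
Qed.

Lemma rho_ne u : exists z, rho u z.
Proof. by have [_ [_ [HA3 _]]] := Hrho; case: (HA3 u). Qed.

Lemma acc_ne : exists u, acceptance rho u.
Proof.
have [z Hz] := rho_ne (fun _ _ => 0).
by exists (fun i j => 0 - z j); apply: rho_acc.
Qed.

Definition gv (x : 'I_M -> R) (y : 'I_N -> R) (i : 'I_I) (j : 'I_J) :=
  matvec C x j + matvec (Q i) y j.

Definition hval (m : 'I_I -> 'I_J -> R) (lam : 'I_I -> 'I_M -> R) i x y :=
  dot (m i) (fun j => gv x y i j) + p i * dot (lam i) x.

Lemma F_bound i : exists B, forall x y, inF A b W T h i x y ->
  (forall k, Rabs (x k) <= B) /\ (forall q, Rabs (y q) <= B).
Proof.
have [_ [B HB]] := HFc i; exists B => x y Hxy; split.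
  move=> k; exact: (HB (fun s => match s with inl k => x k | inr q => y q end) Hxy (inl k)).
move=> q; exact: (HB (fun s => match s with inl k => x k | inr q => y q end) Hxy (inr q)).
Qed.

Lemma hval_lb m lam i : exists r, forall x y, inF A b W T h i x y -> r <= hval m lam i x y.
Proof.
have [B HB] := F_bound i.
pose G := fun j => fsum (fun k => Rabs (C j k) * B) + fsum (fun q => Rabs (Q i j q) * B).
exists (- (fsum (fun j => Rabs (m i j) * G j) + Rabs (p i) * fsum (fun k => Rabs (lam i k) * B))).
move=> x y Hxy; have [Hx Hy] := HB x y Hxy.
have Hg : forall j, Rabs (gv x y i j) <= G j.
  move=> j; rewrite /gv /G; apply: Rle_trans (Rabs_triang _ _) _.
  apply: Rplus_le_compat; exact: dot_abs.
have H1 := dot_abs _ (m i) (fun j => gv x y i j) G Hg.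
have H2 := dot_abs _ (lam i) x (fun _ => B) Hx.
have H3 : Rabs (p i * dot (lam i) x) <= Rabs (p i) * fsum (fun k => Rabs (lam i k) * B).
  rewrite Rabs_mult; apply: Rmult_le_compat_l; [exact: Rabs_pos | exact: H2].
rewrite /hval; move: H1 H3; rewrite /dot /rsum -!/(fsum _).
move: (fsum (fun t => m i t * gv x y i t)) (p i * fsum (fun t => lam i t * x t)) => a1 a2.
move/Rabs_bnd => ? /Rabs_bnd ?; lra.
Qed.

Lemma ft_fin m lam i : exists c, ft_i p A b C W T h Q i (m i) (lam i) = ERf c /\
  (forall x y, inF A b W T h i x y -> c <= hval m lam i x y) /\
  (forall e, 0 < e -> exists x y, inF A b W T h i x y /\ hval m lam i x y < c + e).
Proof.
have [r Hr] := hval_lb m lam i.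
have [x0 [y0 H0]] := HFne i.
have [c [Hc1 [Hc2 Hc3]]] := inf_fin _ (hval m lam i x0 y0) r
  (fun e He => match He with ex_intro x (ex_intro y (conj _ E)) => ex_intro _ _ E end)
  (ex_intro _ x0 (ex_intro _ y0 (conj H0 erefl))) ltac:(move=> y [x' [y' [Hxy [->]]]]; exact: Hr).
exists c; split => //; split.
  by move=> x y Hxy; apply: Hc2; exists x, y.
move=> e He; have [z [[x [y [Hxy [Ez]]]] Hz]] := Hc3 e He.
by exists x, y; split => //; rewrite Ez in Hz.
Qed.


Lemma inX_inF x y i : inX A b W T h x y -> inF A b W T h i x (y i).
Proof. by move=> [H1 [H2 [H3 H4]]]; split => //; split => //; split. Qed.

Lemma nonantic_zero (lam : 'I_I -> 'I_M -> R) x :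
  (forall k, rsum (fun i => p i * lam i k) = 0) -> rsum (fun i => p i * dot (lam i) x) = 0.
Proof.
move=> Hl.
transitivity (fsum (fun i => fsum (fun k => p i * lam i k * x k))).
  by apply: fsum_ext => i; rewrite /dot rsum_fsum -fsum_scale; apply: fsum_ext => k; ring.
rewrite fsum_exchange.
transitivity (fsum (fun k : 'I_M => x k * fsum (fun i => p i * lam i k))).
  by apply: fsum_ext => k; rewrite -fsum_scale; apply: fsum_ext => i; ring.
transitivity (fsum (fun k : 'I_M => 0)); last exact: fsum_const0.
by apply: fsum_ext => k; have := Hl k; rewrite rsum_fsum => ->; ring.
Qed.

Lemma dot_shift_id (a g w : 'I_J -> R) al :
  dot a g - dot a w - dot a (fun j => g j - (w j + al)) = al * rsum a.
Proof.
rewrite /dot !rsum_fsum -!fsum_sub -fsum_scale; apply: fsum_ext => j; ring.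
Qed.

Lemma key_identity m lam x y al :
  (forall k, rsum (fun i => p i * lam i k) = 0) -> rsum (fun i => rsum (m i)) = 1 ->
  rsum (fun i => hval m lam i x (y i)) - rsum (fun i => dot (m i) v)
  - rsum (fun i => dot (m i) (fun j => gv x (y i) i j - (v j + al))) = al.
Proof.
move=> Hl Hm; rewrite !rsum_fsum -!fsum_sub.
transitivity (fsum (fun i => p i * dot (lam i) x + al * rsum (m i))).
  apply: fsum_ext => i; rewrite /hval; have := dot_shift_id (m i) (fun j => gv x (y i) i j) v al.
  lra.
rewrite fsum_add fsum_scale -!rsum_fsum nonantic_zero // Hm; ring.
Qed.

Definition D2val m lam :=
  ER_plus (ER_plus (ER_sum (fun i => ft_i p A b C W T h Q i (m i) (lam i)))
                   (ERf (- rsum (fun i => dot (m i) v))))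
          (ER_opp (beta_t rho m)).

Lemma ft_all m lam : exists c : 'I_I -> R, forall i,
  ft_i p A b C W T h Q i (m i) (lam i) = ERf (c i) /\
  (forall x y, inF A b W T h i x y -> c i <= hval m lam i x y) /\
  (forall e, 0 < e -> exists x y, inF A b W T h i x y /\ hval m lam i x y < c i + e).
Proof. exact: (exists_fun _ (fun i => ft_fin m lam i)). Qed.

Lemma ER_sum_ft m lam (c : 'I_I -> R) :
  (forall i, ft_i p A b C W T h Q i (m i) (lam i) = ERf (c i)) ->
  ER_sum (fun i => ft_i p A b C W T h Q i (m i) (lam i)) = ERf (rsum c).
Proof.
move=> H; rewrite -ER_sum_fin; congr ER_sum; apply: functional_extensionality => i; exact: H.
Qed.

Lemma weak m lam al x y :
  rsum (fun i => rsum (m i)) = 1 -> (forall k, rsum (fun i => p i * lam i k) = 0) ->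
  inX A b W T h x y -> rho (fun i j => matvec C x j + matvec (Q i) (y i) j) (fun j => v j + al) ->
  ER_le (D2val m lam) (ERf al).
Proof.
move=> Hm Hl HX Hr.
have [c Hc] := ft_all m lam.
rewrite /D2val (ER_sum_ft m lam c (fun i => (Hc i).1)) /beta_t.
have [u0 Hu0] := acc_ne.
have [->|[bb [-> Hbb]]] := sup_nonempty_cases
  (fun e => exists u, acceptance rho u /\ e = ERf (rsum (fun i => dot (m i) (u i))))
  (rsum (fun i => dot (m i) (u0 i)))
  (fun e He => match He with ex_intro u (conj _ E) => ex_intro _ _ E end)
  (ex_intro _ u0 (conj Hu0 erefl)); first by [].
rewrite /=.
have Hacc : acceptance rho (fun i j => gv x (y i) i j - (v j + al)) := rho_acc _ _ Hr.
have H1 := Hbb _ (ex_intro _ _ (conj Hacc erefl)).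
have H2 : rsum c <= rsum (fun i => hval m lam i x (y i)).
  rewrite !rsum_fsum; apply: fsum_le => i; apply: (Hc i).2.1; exact: inX_inF.
have := key_identity m lam x y al Hl Hm.
lra.
Qed.

Lemma matvec_lin (m0 n0 : nat) (A0 : 'I_m0 -> 'I_n0 -> R) x1 x2 s k :
  matvec A0 (fun t => x1 t + s * (x2 t - x1 t)) k =
  matvec A0 x1 k + s * (matvec A0 x2 k - matvec A0 x1 k).
Proof.
rewrite /matvec !rsum_fsum -fsum_lin; apply: fsum_ext => t; ring.
Qed.

Lemma inF_conv i x1 y1 x2 y2 s : inF A b W T h i x1 y1 -> inF A b W T h i x2 y2 -> 0 < s < 1 ->
  inF A b W T h i (fun t => x1 t + s * (x2 t - x1 t)) (fun t => y1 t + s * (y2 t - y1 t)).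
Proof.
move=> [Hx1 [Hy1 [HA1 HT1]]] [Hx2 [Hy2 [HA2 HT2]]] Hs.
split; [|split; [|split]].
- by move=> k; have := Hx1 k; have := Hx2 k; nra.
- by move=> k; have := Hy1 k; have := Hy2 k; nra.
- by move=> k; rewrite matvec_lin HA1 HA2; ring.
- move=> l; rewrite !matvec_lin.
  have E : forall a1 a2 b1 b2, a1 + s * (a2 - a1) + (b1 + s * (b2 - b1)) = (a1 + b1) + s * ((a2 + b2) - (a1 + b1)).
    by move=> *; ring.
  by rewrite E HT1 HT2; ring.
Qed.

Definition TT := (('I_I * 'I_J) + ('I_I * 'I_M) + unit)%type.
Definition dco i j : TT := inl (inl (i, j)).
Definition cco i q : TT := inl (inr (i, q)).
Definition tco : TT := inr tt.

Definition Kwit (k : TT -> R) xs ys u al :=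
  (forall i, inF A b W T h i (xs i) (ys i)) /\ acceptance rho u /\
  (forall i j, k (dco i j) = u i j - gv (xs i) (ys i) i j + v j + al) /\
  (forall i q, k (cco i q) = xs i q - rsum (fun l => p l * xs l q)) /\ k tco = al.

Definition Kset (k : TT -> R) := exists xs ys u al, Kwit k xs ys u al.

Lemma ip_TT (a k : TT -> R) : ip a k =
  fsum (fun i => fsum (fun j => a (dco i j) * k (dco i j))) +
  fsum (fun i => fsum (fun q => a (cco i q) * k (cco i q))) + a tco * k tco.
Proof. by rewrite /ip fsum_sumType fsum_sumType !fsum_pair fsum_unit. Qed.

Lemma Kset_conv k1 k2 s : Kset k1 -> Kset k2 -> 0 < s < 1 -> Kset (fun t => k1 t + s * (k2 t - k1 t)).
Proof.
move=> [xs1 [ys1 [u1 [a1 [HF1 [Hu1 [Hd1 [Hc1 Ht1]]]]]]]] [xs2 [ys2 [u2 [a2 [HF2 [Hu2 [Hd2 [Hc2 Ht2]]]]]]]] Hs.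
exists (fun i t => xs1 i t + s * (xs2 i t - xs1 i t)), (fun i t => ys1 i t + s * (ys2 i t - ys1 i t)),
  (fun i j => u1 i j + s * (u2 i j - u1 i j)), (a1 + s * (a2 - a1)).
split; [|split; [|split; [|split]]].
- by move=> i; apply: inF_conv.
- exact: acc_conv.
- move=> i j; rewrite Hd1 Hd2 /gv !matvec_lin; ring.
- move=> i q; rewrite Hc1 Hc2.
  have -> : rsum (fun l => p l * (xs1 l q + s * (xs2 l q - xs1 l q))) =
    rsum (fun l => p l * xs1 l q) + s * (rsum (fun l => p l * xs2 l q) - rsum (fun l => p l * xs1 l q)).
    by rewrite !rsum_fsum -fsum_lin; apply: fsum_ext => l; ring.
  ring.
- by rewrite /= Ht1 Ht2.
Qed.

Lemma Kset_ne : exists k, Kset k.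
Proof.
have [xy Hxy] := exists_fun _ (fun i => match HFne i with ex_intro x (ex_intro y H) =>
   ex_intro (fun xy : ('I_M -> R) * ('I_N -> R) => inF A b W T h i xy.1 xy.2) (x, y) H end).
have [u Hu] := acc_ne.
pose xs := fun i => (xy i).1; pose ys := fun i => (xy i).2.
exists (fun t => match t with
  | inl (inl (i, j)) => u i j - gv (xs i) (ys i) i j + v j + 0
  | inl (inr (i, q)) => xs i q - rsum (fun l => p l * xs l q)
  | inr _ => 0 end), xs, ys, u, 0.
by split.
Qed.

Lemma sq_lt_abs x e : x * x < e * e -> 0 < e -> Rabs x < e.
Proof. move=> H He; case: (Rcase_abs x) => hx; [rewrite Rabs_left // | rewrite Rabs_right //]; nra. Qed.

Lemma cv_from_bound (s : nat -> R) c phi : incr phi ->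
  (forall n, Rabs (s n - c) < / (INR (phi n) + 1)) -> Un_cv s c.
Proof.
move=> Hphi H e He; have [N0 HN] := cv_inv_sub phi Hphi e He; exists N0 => n Hn.
have := HN n Hn; rewrite /R_dist Rminus_0_r => H1.
have H2 := H n; rewrite /R_dist.
have : Rabs (/ (INR (phi n) + 1)) = / (INR (phi n) + 1).
  apply: Rabs_right; apply: Rle_ge; apply: Rlt_le; apply: Rinv_0_lt_compat; have := pos_INR (phi n); lra.
lra.
Qed.

Lemma matvec_cv (m0 n0 : nat) (A0 : 'I_m0 -> 'I_n0 -> R) (xn : nat -> 'I_n0 -> R) x k :
  (forall t, Un_cv (fun n => xn n t) (x t)) -> Un_cv (fun n => matvec A0 (xn n) k) (matvec A0 x k).
Proof.
move=> H; rewrite /matvec rsum_fsum.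
apply: (Un_cv_ext (fun n => fsum (fun t => A0 k t * xn n t))); first by move=> n; rewrite rsum_fsum.
apply: fsum_cv => t; apply: CV_mult; [exact: cv_const | exact: H].
Qed.

Definition pt P eps : TT -> R := fun t => match t with inr _ => P - eps | _ => 0 end.

Lemma Kdist (i0 : 'I_I) P eps : 0 < eps ->
  (forall al x y, inX A b W T h x y ->
     rho (fun i j => matvec C x j + matvec (Q i) (y i) j) (fun j => v j + al) -> P <= al) ->
  exists d, 0 < d /\ forall k, Kset k -> d <= nrm2 (fun t => k t - pt P eps t).
Proof.
move=> Heps HP; apply: NNPP => Hno.
pose en := fun n : nat => / (INR n + 1).
have Hen : forall n, 0 < en n by move=> n; apply: Rinv_0_lt_compat; have := pos_INR n; lra.
have Hseq : forall n : nat, exists w : (TT -> R) * ('I_I -> 'I_M -> R) * ('I_I -> 'I_N -> R)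
      * ('I_I -> 'I_J -> R) * R,
    Kwit w.1.1.1.1 w.1.1.1.2 w.1.1.2 w.1.2 w.2 /\
    nrm2 (fun t => w.1.1.1.1 t - pt P eps t) < en n * en n.
  move=> n; apply: NNPP => Hn; apply: Hno; exists (en n * en n); split.
    by have := Hen n; nra.
  move=> k [xs [ys [u [al Hk]]]]; apply: Rnot_lt_le => Hlt; apply: Hn.
  by exists (k, xs, ys, u, al).
have [w Hw] := exists_fun _ Hseq.
pose kk := fun n => (w n).1.1.1.1.
pose xss := fun n => (w n).1.1.1.2.
pose yss := fun n => (w n).1.1.2.
pose uu := fun n => (w n).1.2.
pose als := fun n => (w n).2.
have HK : forall n, Kwit (kk n) (xss n) (yss n) (uu n) (als n) by move=> n; exact: (Hw n).1.
have Hcoord : forall n t, Rabs (kk n t - pt P eps t) < en n.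
  move=> n t; apply: sq_lt_abs; last exact: Hen.
  apply: Rle_lt_trans (Hw n).2.
  exact: (nrm2_coord _ (fun t => kk n t - pt P eps t) t).
have [Bf HBf] := exists_fun _ F_bound.
pose B := fsum (fun i => Rabs (Bf i)).
pose Z := fun n (iz : 'I_I * ('I_M + 'I_N)) => match iz.2 with
  | inl k => xss n iz.1 k | inr q => yss n iz.1 q end.
have HZ : forall n t, Rabs (Z n t) <= B.
  move=> n [i [k|q]]; have [H1 H2] := HBf i _ _ ((HK n).1 i);
  (apply: Rle_trans; [first [exact: H1 | exact: H2] |]);
  (apply: Rle_trans (Rle_abs _) _; exact: (fsum_term_le _ (fun i => Rabs (Bf i)) i (fun t => Rabs_pos _))).
have [phi [Hphi [lZ HlZ]]] := BWn _ Z B HZ.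
pose xs := fun i k => lZ (i, inl k).
pose ys := fun i q => lZ (i, inr q).
have Hxs : forall i k, Un_cv (fun n => xss (phi n) i k) (xs i k) by move=> i k; exact: (HlZ (i, inl k)).
have Hys : forall i q, Un_cv (fun n => yss (phi n) i q) (ys i q) by move=> i q; exact: (HlZ (i, inr q)).
have HF : forall i, inF A b W T h i (xs i) (ys i).
  move=> i; have [Hcl _] := HFc i.
  apply: (Hcl (fun n s => Z (phi n) (i, s)) (fun s => lZ (i, s))).
    by move=> n; exact: ((HK (phi n)).1 i).
  by move=> s; exact: (HlZ (i, s)).
have Hcvk : forall t, Un_cv (fun n => kk (phi n) t) (pt P eps t).
  by move=> t; apply: (cv_from_bound _ _ phi Hphi) => n; exact: (Hcoord (phi n) t).
pose xbar := fun q => rsum (fun l => p l * xs l q).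
have Hxbar : forall i, xs i = xbar.
  move=> i; apply: functional_extensionality => q.
  have H1 : Un_cv (fun n => kk (phi n) (cco i q)) (xs i q - xbar q).
    apply: (Un_cv_ext (fun n => xss (phi n) i q - rsum (fun l => p l * xss (phi n) l q))).
      by move=> n; rewrite ((HK (phi n)).2.2.2.1 i q).
    apply: CV_minus; first exact: Hxs.
    rewrite /xbar rsum_fsum.
    apply: (Un_cv_ext (fun n => fsum (fun l => p l * xss (phi n) l q))); first by move=> n; rewrite rsum_fsum.
    by apply: fsum_cv => l; apply: CV_mult; [exact: cv_const | exact: Hxs].
  have := UL_sequence _ _ _ H1 (Hcvk (cco i q)); rewrite /=; lra.
have Hacc : acceptance rho (fun i j => gv (xs i) (ys i) i j - (v j + (P - eps))).
  have [_ [_ [_ [_ HA5]]]] := Hrho.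
  apply: (HA5 (fun n ij => uu (phi n) ij.1 ij.2)
     (fun ij => gv (xs ij.1) (ys ij.1) ij.1 ij.2 - (v ij.2 + (P - eps)))).
    by move=> n; exact: ((HK (phi n)).2.1).
  move=> [i j] /=.
  apply: (Un_cv_ext (fun n => kk (phi n) (dco i j) + gv (xss (phi n) i) (yss (phi n) i) i j
     - v j - kk (phi n) tco)).
    move=> n; rewrite ((HK (phi n)).2.2.1 i j) ((HK (phi n)).2.2.2.2); ring.
  have -> : gv (xs i) (ys i) i j - (v j + (P - eps)) =
     pt P eps (dco i j) + gv (xs i) (ys i) i j - v j - pt P eps tco by rewrite /=; ring.
  apply: CV_minus; last exact: Hcvk.
  apply: CV_minus; last exact: cv_const.
  apply: CV_plus; first exact: Hcvk.
  by apply: CV_plus; apply: matvec_cv; [exact: Hxs i | exact: Hys i].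
have Hr := acc_rho _ _ Hacc.
have HX : inX A b W T h xbar ys.
  have [Hx0 [_ [HA0 _]]] := HF i0; rewrite (Hxbar i0) in Hx0 HA0.
  split => //; split; first by move=> i n; exact: ((HF i).2.1 n).
  split => // i l; have := (HF i).2.2.2 l; by rewrite (Hxbar i).
have := HP (P - eps) xbar ys HX.
have : rho (fun i j => matvec C xbar j + matvec (Q i) (ys i) j) (fun j => v j + (P - eps)).
  move: Hr; apply: rho_ext => // i j; by rewrite /gv (Hxbar i).
move=> H /(_ H); lra.
Qed.

Lemma fsum_zero (T0 : finType) (F : T0 -> R) : (forall t, F t = 0) -> fsum F = 0.
Proof. by move=> H; rewrite -(fsum_const0 T0); apply: fsum_ext. Qed.

Lemma ip_lin (T0 : finType) (a k e : T0 -> R) s : ip a (fun t => k t + s * e t) = ip a k + s * ip a e.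
Proof. rewrite /ip -fsum_scale -fsum_add; apply: fsum_ext => t; ring. Qed.

Lemma direction (a : TT -> R) P eps dl k e :
  (forall k, Kset k -> ip a (pt P eps) + dl <= ip a k) ->
  (forall s, 0 <= s -> Kset (fun t => k t + s * e t)) -> 0 <= ip a e.
Proof.
move=> Hsep Hk; apply: NNPP => Hn; have Hneg : ip a e < 0 by apply: Rnot_le_lt.
have H0 : Kset k.
  have E : (fun t => k t + 0 * e t) = k by apply: functional_extensionality => t; ring.
  by have := Hk 0 (Rle_refl 0); rewrite E.
have H1 := Hsep k H0.
pose s := (ip a k - ip a (pt P eps) - dl + 1) / (- ip a e).
have Hs : 0 <= s by apply: Rlt_le; apply: Rdiv_lt_0_compat; lra.
have := Hsep _ (Hk s Hs); rewrite ip_lin.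
have -> : s * ip a e = - (ip a k - ip a (pt P eps) - dl + 1) by rewrite /s; field; lra.
lra.
Qed.

Section Signs.
Variables (a : TT -> R) (P eps dl : R).
Hypothesis Hsep : forall k, Kset k -> ip a (pt P eps) + dl <= ip a k.
Hypothesis Hdl : 0 < dl.

Lemma sign_d i j : a (dco i j) <= 0.
Proof.
have [k0 [xs0 [ys0 [u0 [al0 [HF [Hu [Hd [Hc Ht]]]]]]]]] := Kset_ne.
pose e := fun t : TT => match t with inl (inl ij) => if ij == (i, j) then -1 else 0 | _ => 0 end.
have Hdir := direction a P eps dl k0 e Hsep.
have Hip : ip a e = - a (dco i j).
  rewrite /ip fsum_sumType fsum_sumType fsum_unit.
  rewrite (fsum_single _ _ (i, j)); last first.
    by move=> t Hne /=; case: eqP => [E|_]; [by case: Hne | ring].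
  rewrite /= eqxx.
  have -> : fsum (fun b0 : 'I_I * 'I_M => a (inl (inr b0)) * e (inl (inr b0))) = 0.
    by apply: fsum_zero => t /=; ring.
  rewrite /dco; ring.
suff : 0 <= ip a e by rewrite Hip; lra.
apply: Hdir => s Hs.
exists xs0, ys0, (fun i' j' => u0 i' j' + s * (if (i', j') == (i, j) then -1 else 0)), al0.
split; [|split; [|split; [|split]]] => //.
- apply: (acc_down _ u0) => // i' j'; case: ((i', j') == (i, j)); lra.
- move=> i' j'; rewrite /= Hd; ring.
- move=> i' q; rewrite /= Hc; ring.
- by rewrite /= Ht; ring.
Qed.

Lemma sign_sum : fsum (fun i => fsum (fun j => a (dco i j))) + a tco = 0.
Proof.
have [k0 [xs0 [ys0 [u0 [al0 [HF [Hu [Hd [Hc Ht]]]]]]]]] := Kset_ne.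
have H : forall sg, 0 <= sg * (fsum (fun i => fsum (fun j => a (dco i j))) + a tco).
  move=> sg.
  pose e := fun t : TT => match t with inl (inl _) => sg | inl (inr _) => 0 | inr _ => sg end.
  have Hip : ip a e = sg * (fsum (fun i => fsum (fun j => a (dco i j))) + a tco).
    rewrite /ip fsum_sumType fsum_sumType fsum_unit /=.
    have -> : fsum (fun b0 : 'I_I * 'I_M => a (inl (inr b0)) * 0) = 0.
      by apply: fsum_zero => t /=; ring.
    have -> : fsum (fun a0 : 'I_I * 'I_J => a (inl (inl a0)) * sg) =
              sg * fsum (fun i => fsum (fun j => a (dco i j))).
      rewrite fsum_pair -fsum_scale; apply: fsum_ext => i; rewrite -fsum_scale.
      by apply: fsum_ext => j; rewrite /dco Rmult_comm.
    by rewrite /tco Rplus_0_r Rmult_plus_distr_l (Rmult_comm (a _) sg).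
  rewrite -Hip; apply: (direction a P eps dl k0 e Hsep) => s Hs.
  exists xs0, ys0, u0, (al0 + s * sg).
  split; [|split; [|split; [|split]]] => //.
  - move=> i' j'; rewrite /= Hd; ring.
  - move=> i' q; rewrite /= Hc; ring.
  - by rewrite /= Ht.
have := H 1; have := H (-1); lra.
Qed.

Lemma sign_t (al1 : R) x1 y1 :
  (forall al x y, inX A b W T h x y ->
     rho (fun i j => matvec C x j + matvec (Q i) (y i) j) (fun j => v j + al) -> P <= al) ->
  inX A b W T h x1 y1 ->
  rho (fun i j => matvec C x1 j + matvec (Q i) (y1 i) j) (fun j => v j + al1) ->
  0 < eps -> 0 < a tco.
Proof.
move=> HP HX Hr Heps.
have HPa := HP _ _ _ HX Hr.
pose kp := fun t : TT => match t with inr _ => al1 | _ => 0 end.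
have Hkp : Kset kp.
  exists (fun _ => x1), y1, (fun i j => gv x1 (y1 i) i j - (v j + al1)), al1.
  split; [|split; [|split; [|split]]] => //.
  - by move=> i; apply: inX_inF.
  - exact: rho_acc.
  - by move=> i j /=; ring.
  - move=> i q /=; have -> : rsum (fun l => p l * x1 q) = rsum p * x1 q.
      by rewrite !rsum_fsum Rmult_comm -fsum_scale; apply: fsum_ext => l /=; ring.
    rewrite Hp1; ring.
have Hz : forall k : TT -> R, (forall t, t <> tco -> k t = 0) -> ip a k = a tco * k tco.
  move=> k Hk; rewrite /ip; apply: fsum_single => t Ht; rewrite Hk //; ring.
have := Hsep kp Hkp.
rewrite (Hz kp) // ?(Hz (pt P eps)) //; last by move=> [[]|[]].
  rewrite /=; move=> H; apply: NNPP => Hn; have Hle : a tco <= 0 by apply: Rnot_lt_le.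
  nra.
by move=> [[]|[]].
Qed.

End Signs.

Lemma ip_tonly (a k : TT -> R) : (forall t, t <> tco -> k t = 0) -> ip a k = a tco * k tco.
Proof. move=> Hk; rewrite /ip; apply: fsum_single => t Ht; rewrite Hk //; ring. Qed.

Lemma choose_F (c : 'I_I -> R) (m : 'I_I -> 'I_J -> R) lam e :
  (forall i, exists x y, inF A b W T h i x y /\ hval m lam i x y < c i + e) ->
  exists xs ys, forall i, inF A b W T h i (xs i) (ys i) /\ hval m lam i (xs i) (ys i) < c i + e.
Proof.
move=> H.
have [xy Hxy] := exists_fun (fun i (xy : ('I_M -> R) * ('I_N -> R)) =>
   inF A b W T h i xy.1 xy.2 /\ hval m lam i xy.1 xy.2 < c i + e)
  (fun i => match H i with ex_intro x (ex_intro y Hh) => ex_intro _ (x, y) Hh end).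
by exists (fun i => (xy i).1), (fun i => (xy i).2).
Qed.

Lemma strong (i0 : 'I_I) P eps : 0 < eps ->
  (forall al x y, inX A b W T h x y ->
     rho (fun i j => matvec C x j + matvec (Q i) (y i) j) (fun j => v j + al) -> P <= al) ->
  (exists al1 x1 y1, inX A b W T h x1 y1 /\
     rho (fun i j => matvec C x1 j + matvec (Q i) (y1 i) j) (fun j => v j + al1)) ->
  exists m lam, in_Mf m /\ rsum (fun i => rsum (m i)) = 1 /\
    (forall k, rsum (fun i => p i * lam i k) = 0) /\ ER_le (ERf (P - eps)) (D2val m lam).
Proof.
move=> Heps HP [al1 [x1 [y1 [HX1 Hr1]]]].
have [d [Hd Hdist]] := Kdist i0 P eps Heps HP.
have [a [dl [Hdl Hsep]]] := separation TT Kset (pt P eps) Kset_conv Kset_ne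
  (ex_intro _ d (conj Hd Hdist)).
pose aT := a tco.
have Hat : 0 < aT := sign_t a P eps dl Hsep Hdl al1 x1 y1 HP HX1 Hr1 Heps.
have Hsum := sign_sum a P eps dl Hsep.
pose m := fun i j => - a (dco i j) / aT.
pose S := fun q => rsum (fun l => a (cco l q)).
pose lam := fun i q => (a (cco i q) / p i - S q) / aT.
have Hm0 : in_Mf m.
  move=> i j; rewrite /m /Rdiv; apply: Rmult_le_pos.
    by have := sign_d a P eps dl Hsep i j; lra.
  by left; apply: Rinv_0_lt_compat.
have Hm1 : rsum (fun i => rsum (m i)) = 1.
  rewrite rsum_fsum.
  transitivity (-1 / aT * fsum (fun i => fsum (fun j => a (dco i j)))).
    rewrite -fsum_scale; apply: fsum_ext => i; rewrite rsum_fsum -fsum_scale.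
    by apply: fsum_ext => j; rewrite /m /Rdiv; ring.
  have -> : fsum (fun i => fsum (fun j => a (dco i j))) = - aT by move: Hsum; unfold aT; lra.
  field; lra.
have Hl : forall k, rsum (fun i => p i * lam i k) = 0.
  move=> k; rewrite rsum_fsum.
  transitivity (fsum (fun i => / aT * (a (cco i k) - S k * p i))).
    apply: fsum_ext => i; rewrite /lam; have := Hp i; move=> Hpi; field; lra.
  by rewrite fsum_scale fsum_sub fsum_scale -(rsum_fsum _ p) Hp1 Rmult_1_r /S rsum_fsum Rminus_diag Rmult_0_r.
have HM : forall xs ys u, (forall i, inF A b W T h i (xs i) (ys i)) -> acceptance rho u ->
    P - eps + dl / aT <= rsum (fun i => hval m lam i (xs i) (ys i)) - rsum (fun i => dot (m i) v)
                          - rsum (fun i => dot (m i) (u i)).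
  move=> xs ys u HF Hu.
  pose X := fun q => rsum (fun l => p l * xs l q).
  pose k := fun t : TT => match t with
    | inl (inl (i, j)) => u i j - gv (xs i) (ys i) i j + v j + 0
    | inl (inr (i, q)) => xs i q - X q
    | inr _ => 0 end.
  have Hk : Kset k by exists xs, ys, u, 0.
  have H1 := Hsep k Hk.
  rewrite (ip_tonly a (pt P eps)) in H1; last by move=> [[]|[]].
  rewrite ip_TT in H1.
  have E1 : forall i, aT * (hval m lam i (xs i) (ys i) - dot (m i) v - dot (m i) (u i)) =
      fsum (fun j => a (dco i j) * k (dco i j)) + fsum (fun q => (a (cco i q) - p i * S q) * xs i q).
    move=> i.
    have Ed : fsum (fun j => a (dco i j) * k (dco i j)) =
        aT * (dot (m i) (fun j => gv (xs i) (ys i) i j) - dot (m i) v - dot (m i) (u i)).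
      rewrite /dot !rsum_fsum -!fsum_sub -fsum_scale; apply: fsum_ext => j.
      rewrite /m /= ; field; lra.
    have Ec : fsum (fun q => (a (cco i q) - p i * S q) * xs i q) = aT * (p i * dot (lam i) (xs i)).
      rewrite /dot rsum_fsum -!fsum_scale; apply: fsum_ext => q.
      rewrite /lam; have := Hp i => Hpi; field; lra.
    rewrite Ed Ec /hval; ring.
  have E2 : fsum (fun i => fsum (fun q => (a (cco i q) - p i * S q) * xs i q)) =
            fsum (fun i => fsum (fun q => a (cco i q) * k (cco i q))).
    have Ea : fsum (fun i => fsum (fun q => p i * S q * xs i q)) =
              fsum (fun i => fsum (fun q => a (cco i q) * X q)).
      rewrite fsum_exchange (fsum_exchange _ _ (fun i q => a (cco i q) * X q)).
      apply: fsum_ext => q.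
      transitivity (S q * X q).
        rewrite /X rsum_fsum -fsum_scale; apply: fsum_ext => i; ring.
      by rewrite /S rsum_fsum Rmult_comm -fsum_scale; apply: fsum_ext => i; ring.
    transitivity (fsum (fun i => fsum (fun q => a (cco i q) * xs i q)) -
                  fsum (fun i => fsum (fun q => p i * S q * xs i q))).
      rewrite -fsum_sub; apply: fsum_ext => i; rewrite -fsum_sub; apply: fsum_ext => q; ring.
    rewrite Ea -fsum_sub; apply: fsum_ext => i; rewrite -fsum_sub; apply: fsum_ext => q /=; ring.
  have E3 : aT * (rsum (fun i => hval m lam i (xs i) (ys i)) - rsum (fun i => dot (m i) v)
                          - rsum (fun i => dot (m i) (u i))) =
      fsum (fun i => fsum (fun j => a (dco i j) * k (dco i j))) +
      fsum (fun i => fsum (fun q => a (cco i q) * k (cco i q))).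
    rewrite -E2 -fsum_add !rsum_fsum -!fsum_sub -fsum_scale; apply: fsum_ext => i; exact: E1.
  have Hk0 : k tco = 0 by [].
  rewrite Hk0 /= in H1.
  have : aT * (P - eps) + dl <= aT * (rsum (fun i => hval m lam i (xs i) (ys i)) - rsum (fun i => dot (m i) v)
                          - rsum (fun i => dot (m i) (u i))).
    by rewrite E3; move: H1; rewrite Rmult_0_r Rplus_0_r.
  move: (rsum (fun i => hval m lam i (xs i) (ys i)) - rsum (fun i => dot (m i) v)
                          - rsum (fun i => dot (m i) (u i))) => z Hz.
  have -> : dl / aT = / aT * dl by rewrite /Rdiv Rmult_comm.
  apply: (Rmult_le_reg_l aT) => //.
  have -> : aT * (P - eps + / aT * dl) = aT * (P - eps) + dl by field; lra.
  exact: Hz.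
exists m, lam; split => //; split => //; split => //.
have [c Hc] := ft_all m lam.
rewrite /D2val (ER_sum_ft m lam c (fun i => (Hc i).1)) /beta_t.
have [xs0 [ys0 H0]] := choose_F c m lam 1 (fun i => (Hc i).2.2 1 ltac:(lra)).
have [u0 Hu0] := acc_ne.
have [bb [-> [Hbb1 Hbb2]]] := sup_fin
  (fun e => exists u, acceptance rho u /\ e = ERf (rsum (fun i => dot (m i) (u i))))
  (rsum (fun i => dot (m i) (u0 i)))
  (rsum (fun i => hval m lam i (xs0 i) (ys0 i)) - rsum (fun i => dot (m i) v) - (P - eps + dl / aT))
  (fun e He => match He with ex_intro u (conj _ E) => ex_intro _ _ E end)
  (ex_intro _ u0 (conj Hu0 erefl))
  ltac:(move=> y [u [Hu [Ey]]]; rewrite Ey; have := HM xs0 ys0 u (fun i => (H0 i).1) Hu; lra).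
rewrite /=.
pose n0 := fsum (fun _ : 'I_I => 1).
have Hn0 : 0 <= n0 by apply: fsum_ge0 => _; lra.
have Hdla : 0 < dl / aT by apply: Rdiv_lt_0_compat.
pose e' := dl / aT / (n0 + 1).
have He' : 0 < e' by apply: Rdiv_lt_0_compat; lra.
have [xs [ys Hxy]] := choose_F c m lam e' (fun i => (Hc i).2.2 e' He').
have [z [[u [Hu [Ez]]] Hz]] := Hbb2 e' He'.
have HMu := HM xs ys u (fun i => (Hxy i).1) Hu.
have Hsh : rsum (fun i => hval m lam i (xs i) (ys i)) <= rsum c + e' * n0.
  rewrite !rsum_fsum /n0 -fsum_scale -fsum_add; apply: fsum_le => i.
  have := (Hxy i).2; lra.
have Hee : e' * (n0 + 1) = dl / aT by rewrite /e'; field; lra.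
rewrite Ez in Hz.
nra.
Qed.

Lemma ER_inf_ext (S1 S2 : ER -> Prop) : (forall e, S1 e <-> S2 e) -> ER_inf S1 = ER_inf S2.
Proof.
move=> H; congr ER_inf; apply: functional_extensionality => e.
by apply: propositional_extensionality.
Qed.

Lemma ER_sup_ext (S1 S2 : ER -> Prop) : (forall e, S1 e <-> S2 e) -> ER_sup S1 = ER_sup S2.
Proof.
move=> H; congr ER_sup; apply: functional_extensionality => e.
by apply: propositional_extensionality.
Qed.

Lemma D1_D2_val (mu m : 'I_I -> 'I_J -> R) (gam : 'I_J -> R) lam :
  (forall i j, m i j = gam j * mu i j) -> (forall j, rsum (fun i => mu i j) = 1) ->
  ER_plus (ER_plus (ER_sum (fun i => f_i p A b C W T h Q i (mu i) (lam i) gam))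
                   (ERf (- dot gam v)))
          (ER_opp (beta rho mu gam)) = D2val m lam.
Proof.
move=> Hm Hmu; rewrite /D2val.
have -> : (fun i => f_i p A b C W T h Q i (mu i) (lam i) gam) =
          (fun i => ft_i p A b C W T h Q i (m i) (lam i)).
  apply: functional_extensionality => i; apply: ER_inf_ext => e.
  have E : forall x y, dot gam (fun j => mu i j * (matvec C x j + matvec (Q i) y j)) =
                       dot (m i) (fun j => matvec C x j + matvec (Q i) y j).
    by move=> x y; rewrite /dot !rsum_fsum; apply: fsum_ext => j; rewrite Hm; ring.
  by split => -[x [y [Hxy ->]]]; exists x, y; split => //; rewrite E.
have -> : dot gam v = rsum (fun i => dot (m i) v).
  rewrite /dot !rsum_fsum.
  transitivity (fsum (fun j => fsum (fun i => gam j * mu i j * v j))).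
    apply: fsum_ext => j.
    have := Hmu j; rewrite rsum_fsum => Hs.
    transitivity (gam j * v j * fsum (fun i => mu i j)); first by rewrite Hs; ring.
    by rewrite -fsum_scale; apply: fsum_ext => i; ring.
  rewrite fsum_exchange; apply: fsum_ext => i; rewrite rsum_fsum; apply: fsum_ext => j; rewrite Hm; ring.
have -> : beta rho mu gam = beta_t rho m.
  rewrite /beta /beta_t; apply: ER_sup_ext => e.
  have E : forall u : 'I_I -> 'I_J -> R, dot gam (fun j => rsum (fun i => mu i j * u i j)) =
             rsum (fun i => dot (m i) (u i)).
    move=> u; rewrite /dot !rsum_fsum.
    transitivity (fsum (fun j => fsum (fun i => gam j * mu i j * u i j))).
      by apply: fsum_ext => j; rewrite rsum_fsum -fsum_scale; apply: fsum_ext => i; ring.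
    rewrite fsum_exchange; apply: fsum_ext => i; rewrite rsum_fsum; apply: fsum_ext => j; rewrite Hm; ring.
  by split => -[u [Hu ->]]; exists u; split => //; rewrite E.
by [].
Qed.

Lemma D1_iff_D2 e : D1_set p A b C W T h Q rho v e <-> D2_set p A b C W T h Q rho v e.
Proof.
split.
- move=> [mu [lam [gam [[Hmu0 Hmu1] [Hg0 [Hg1 [Hl ->]]]]]]].
  exists (fun i j => gam j * mu i j), lam; split; [|split; [|split]] => //.
  + by move=> i j; apply: Rmult_le_pos.
  + rewrite rsum_fsum.
    transitivity (fsum (fun j => gam j * rsum (fun i => mu i j))).
      rewrite fsum_exchange; apply: fsum_ext => j; rewrite !rsum_fsum -fsum_scale; by apply: fsum_ext.
    rewrite -Hg1 rsum_fsum; apply: fsum_ext => j; rewrite Hmu1; ring.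
  + exact: (D1_D2_val mu (fun i j => gam j * mu i j) gam lam).
- move=> [m [lam [Hm0 [Hm1 [Hl ->]]]]].
  pose gam := fun j => rsum (fun i => m i j).
  have Hg0 : forall j, 0 <= gam j by move=> j; rewrite /gam rsum_fsum; apply: fsum_ge0 => i; exact: Hm0.
  pose mu := fun i j => if Rlt_dec 0 (gam j) then m i j / gam j else p i.
  have Hmm : forall i j, m i j = gam j * mu i j.
    move=> i j; rewrite /mu; case: (Rlt_dec 0 (gam j)) => Hg /=.
      by field; lra.
    have Hg' : gam j = 0 by have := Hg0 j; lra.
    have := fsum_eq0 _ (fun i => m i j) (fun i => Hm0 i j); rewrite -rsum_fsum => /(_ Hg') ->.
    by rewrite Hg'; ring.
  have Hmu1 : forall j, rsum (fun i => mu i j) = 1.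
    move=> j; rewrite /mu; case: (Rlt_dec 0 (gam j)) => Hg /= //.
    rewrite rsum_fsum.
    transitivity (/ gam j * gam j); last by field; lra.
    by rewrite /gam rsum_fsum -fsum_scale; apply: fsum_ext => i; rewrite /Rdiv Rmult_comm.
  exists mu, lam, gam; split; [split|split; [|split; [|split]]] => //.
  + move=> i j; rewrite /mu; case: (Rlt_dec 0 (gam j)) => Hg /=.
      by apply: Rmult_le_pos; [exact: Hm0 | left; apply: Rinv_0_lt_compat].
    by left; exact: Hp.
  + rewrite -Hm1 /gam !rsum_fsum fsum_exchange; apply: fsum_ext => i; by rewrite rsum_fsum.
  + by rewrite (D1_D2_val mu m gam lam Hmm Hmu1).
Qed.

Lemma ER_le_trans x y z : ER_le x y -> ER_le y z -> ER_le x z.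
Proof. by case: x => [x||]; case: y => [y||]; case: z => [z||] //=; lra. Qed.

Lemma sup_equiv (S1 S2 : ER -> Prop) s : (forall e, S1 e <-> S2 e) -> is_sup_ER S2 s -> is_sup_ER S1 s.
Proof.
move=> H [H1 H2]; split; first by move=> y /H; exact: H1.
by move=> z Hz; apply: H2 => y /H; exact: Hz.
Qed.

Lemma feasible_ne (HXne : exists x y, inX A b W T h x y) : exists al x y, inX A b W T h x y /\
  rho (fun i j => matvec C x j + matvec (Q i) (y i) j) (fun j => v j + al).
Proof.
have [x [y HX]] := HXne.
have [z Hz] := rho_ne (fun i j => matvec C x j + matvec (Q i) (y i) j).
exists (fsum (fun j => Rabs (z j - v j))), x, y; split => //.
apply: (rho_up _ _ _ Hz) => j.
have := fsum_term_le _ (fun j => Rabs (z j - v j)) j (fun t => Rabs_pos _).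
have := Rle_abs (z j - v j); lra.
Qed.

Lemma final (i0 : 'I_I) (HXne : exists x y, inX A b W T h x y) :
  exists P2 : ER,
    is_inf_ER (P2_set A b C W T h Q rho v) P2 /\
    is_sup_ER (D1_set p A b C W T h Q rho v) P2 /\
    is_sup_ER (D2_set p A b C W T h Q rho v) P2.
Proof.
have Hfeas := feasible_ne HXne.
have [al1 [x1 [y1 [HX1 Hr1]]]] := Hfeas.
have Hweak : forall e, D2_set p A b C W T h Q rho v e -> forall al x y, inX A b W T h x y ->
    rho (fun i j => matvec C x j + matvec (Q i) (y i) j) (fun j => v j + al) -> ER_le e (ERf al).
  move=> e [m [lam [Hm0 [Hm1 [Hl ->]]]]] al x y HX Hr; exact: (weak m lam al x y Hm1 Hl HX Hr).
case: (classic (exists r, forall al x y, inX A b W T h x y ->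
    rho (fun i j => matvec C x j + matvec (Q i) (y i) j) (fun j => v j + al) -> r <= al)) => Hb.
- pose E := fun r => exists x y, inX A b W T h x y /\
    rho (fun i j => matvec C x j + matvec (Q i) (y i) j) (fun j => v j + - r).
  have [mm [Hm1 Hm2]] : {mm | is_lub E mm}.
    apply: completeness.
      case: Hb => r Hr; exists (- r) => q [x [y [HX Hr']]]; have := Hr _ _ _ HX Hr'; lra.
    by exists (- al1), x1, y1; rewrite Ropp_involutive.
  pose P := - mm.
  have HP : forall al x y, inX A b W T h x y ->
      rho (fun i j => matvec C x j + matvec (Q i) (y i) j) (fun j => v j + al) -> P <= al.
    move=> al x y HX Hr; have := Hm1 (- al); rewrite /P.
    have : E (- al) by exists x, y; rewrite Ropp_involutive.
    by move=> H /(_ H); lra.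
  have HPg : forall z, (forall al x y, inX A b W T h x y ->
      rho (fun i j => matvec C x j + matvec (Q i) (y i) j) (fun j => v j + al) -> z <= al) -> z <= P.
    move=> z Hz; have : mm <= - z; last by rewrite /P; lra.
    by apply: Hm2 => q [x [y [HX Hr]]]; have := Hz _ _ _ HX Hr; lra.
  have HD2 : is_sup_ER (D2_set p A b C W T h Q rho v) (ERf P).
    split.
    + move=> e He; have := Hweak e He; move: He.
      case: e => [r||] //= He Hw.
        by apply: HPg => al x y HX Hr; exact: (Hw al x y HX Hr).
      by have := Hw al1 x1 y1 HX1 Hr1.
    + move=> [z||] Hz //=.
        apply: Rnot_lt_le => Hlt.
        have [m [lam [Hm0 [Hm1' [Hl Hv]]]]] := strong i0 P ((P - z) / 2) ltac:(lra) HP Hfeas.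
        have He : D2_set p A b C W T h Q rho v (D2val m lam) by exists m, lam.
        have := ER_le_trans _ _ _ Hv (Hz _ He) => /=; lra.
      have [m [lam [Hm0 [Hm1' [Hl Hv]]]]] := strong i0 P 1 ltac:(lra) HP Hfeas.
      have He : D2_set p A b C W T h Q rho v (D2val m lam) by exists m, lam.
      exact: (ER_le_trans _ _ _ Hv (Hz _ He)).
  exists (ERf P); split; [|split] => //.
  + split.
      by move=> y [al [x [y' [HX [Hr ->]]]]] /=; exact: (HP al x y' HX Hr).
    move=> [z||] Hz //=.
      by apply: HPg => al x y HX Hr; exact: (Hz (ERf al) (ex_intro _ al (ex_intro _ x (ex_intro _ y (conj HX (conj Hr erefl)))))).
    by have := Hz (ERf al1) (ex_intro _ al1 (ex_intro _ x1 (ex_intro _ y1 (conj HX1 (conj Hr1 erefl))))).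
  + exact: (sup_equiv _ _ _ D1_iff_D2 HD2).
- have HD2 : is_sup_ER (D2_set p A b C W T h Q rho v) ERn.
    split => //.
    move=> e He; have := Hweak e He; move: He.
    case: e => [r||] //= He Hw.
      by case: Hb; exists r => al x y HX Hr; exact: (Hw al x y HX Hr).
    by have := Hw al1 x1 y1 HX1 Hr1.
  exists ERn; split; [|split] => //.
  + split => //.
    move=> [z||] Hz //=.
      case: Hb; exists z => al x y HX Hr.
      exact: (Hz (ERf al) (ex_intro _ al (ex_intro _ x (ex_intro _ y (conj HX (conj Hr erefl)))))).
    by have := Hz (ERf al1) (ex_intro _ al1 (ex_intro _ x1 (ex_intro _ y1 (conj HX1 (conj Hr1 erefl))))).
  + exact: (sup_equiv _ _ _ D1_iff_D2 HD2).
Qed.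

End Main.


Theorem theorem5p6
  (I J M N K L : nat) (HI : (2 <= I)%nat) (HJ : (1 <= J)%nat)
  (p : 'I_I -> R) (Hp : forall i, 0 < p i) (Hp1 : rsum p = 1)
  (A : 'I_K -> 'I_M -> R) (b : 'I_K -> R) (C : 'I_J -> 'I_M -> R)
  (W : 'I_I -> 'I_L -> 'I_N -> R) (T : 'I_I -> 'I_L -> 'I_M -> R)
  (h : 'I_I -> 'I_L -> R) (Q : 'I_I -> 'I_J -> 'I_N -> R)
  (rho : ('I_I -> 'I_J -> R) -> ('I_J -> R) -> Prop)
  (Hrho : is_mv_convex_risk_measure rho)
  (HXne : exists x y, inX A b W T h x y)
  (HXc : compact_set (fun f : 'I_M + ('I_I * 'I_N) -> R =>
            inX A b W T h (fun k => f (inl k)) (fun i n => f (inr (i, n)))))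
  (HFne : forall i, exists x y, inF A b W T h i x y)
  (HFc : forall i, compact_set (fun f : 'I_M + 'I_N -> R =>
            inF A b W T h i (fun k => f (inl k)) (fun n => f (inr n))))
  (v : 'I_J -> R) :
  exists P2 : ER,
    is_inf_ER (P2_set A b C W T h Q rho v) P2 /\
    is_sup_ER (D1_set p A b C W T h Q rho v) P2 /\
    is_sup_ER (D2_set p A b C W T h Q rho v) P2.
Proof.
have Hi0 : leq 1 I by apply/leP; lia.
move: (Ordinal Hi0) => i0.
by apply: final.
Qed.
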